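(* Let $H$ be a real Hilbert space, let $D\subseteq H$ be a nonempty closed convex set, let $I$ be a countable set of positive integers, and let $(T_i)_{i\in I}$ be firmly nonexpansive operators $T_i:D\to D$ with $F:=\bigcap_{i\in I}\mathrm{Fix}(T_i)\neq\emptyset$. Let $(\Omega,w)\in\mathcal{M}_\infty$ and let $T:=\sum_{t\in\Omega}w(t)T[t]$ (the series converging pointwise in $H$). Then $\mathrm{Fix}(T)=\bigcap_{i\in I}\mathrm{Fix}(T_i)$.
   Context: An operator $T:D\to H$ is firmly nonexpansive if $\|T(x)-T(y)\|^2\le\langle x-y,T(x)-T(y)\rangle$ for all $x,y\in D$. $\mathrm{Fix}(T)=\{x\in D:T(x)=x\}$. An index vector is a finite tuple $t=(t_1,\dots,t_q)$ with each $t_\ell\in I$; the string operator is $T[t]:=T_{t_q}T_{t_{q-1}}\cdots T_{t_1}$. A countable set $\Omega$ of index vectors is fit if every $i\in I$ appears as a component of some $t\in\Omega$. $\mathcal{M}_\infty$ denotes the collection of all pairs $(\Omega,w)$ where $\Omega$ is a fit countable set of index vectors and $w:\Omega\to(0,1)$ satisfies $\sum_{t\in\Omega}w(t)=1$. *)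

(* Defs.v *)
From HB Require Import structures.
From mathcomp Require Import all_boot all_order all_algebra.
From mathcomp Require Import all_classical all_reals all_analysis.
From mathcomp Require Export finmap.
Set Implicit Arguments. Unset Strict Implicit. Unset Printing Implicit Defensive.
Import Order.TTheory GRing.Theory Num.Theory.
Import numFieldNormedType.Exports.
Local Open Scope classical_set_scope.
Local Open Scope ring_scope.

Section Defs.
Variable R : realType.

(* ip is a real inner product on H inducing the norm of H; together with
   completeness of H this makes H a real Hilbert space. *)
Definition is_inner_product (H : normedModType R) (ip : H -> H -> R) : Prop :=
  [/\ forall x y, ip x y = ip y x,
      forall x y z, ip (x + y) z = ip x z + ip y z,
      forall (a : R) x y, ip (a *: x) y = a * ip x y &
      forall x, ip x x = `|x| ^+ 2].

Definition convex_set_in (H : normedModType R) (D : set H) : Prop :=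
  forall x y (l : R), D x -> D y -> 0 <= l -> l <= 1 ->
    D (l *: x + (1 - l) *: y).

Definition firmly_nonexpansive (H : normedModType R) (ip : H -> H -> R)
  (D : set H) (T : H -> H) : Prop :=
  forall x y, D x -> D y -> `|T x - T y| ^+ 2 <= ip (x - y) (T x - T y).

Definition Fix (H : normedModType R) (D : set H) (T : H -> H) : set H :=
  [set x | D x /\ T x = x].

(* unconditional (net over finite subsets) summation of f over Om, with sum s *)
Definition has_sum (K : choiceType) (H : normedModType R) (Om : set K)
  (f : K -> H) (s : H) : Prop :=
  forall e : R, 0 < e -> exists F0 : {fset K}, [set` F0] `<=` Om /\
    forall F : {fset K}, [set` F0] `<=` [set` F] -> [set` F] `<=` Om ->
      `|\sum_(t <- F) f t - s| < e.

End Defs.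

Definition index_vector (I : set nat) (t : seq nat) : Prop :=
  t <> [::] /\ forall i, i \in t -> I i.

(* string operator T[t] := T_{t_q} ... T_{t_1} (T_{t_1} applied first) *)
Definition string_op (H : Type) (T : nat -> H -> H) (t : seq nat) (x : H) : H :=
  foldl (fun y i => T i y) x t.

Definition fit (I : set nat) (Om : set (seq nat)) : Prop :=
  forall i, I i -> exists t, Om t /\ i \in t.

Definition M_infty (R : realType) (I : set nat) (Om : set (seq nat))
  (w : seq nat -> R) : Prop :=
  [/\ Om `<=` index_vector I, fit I Om,
      (forall t, Om t -> 0 < w t /\ w t < 1) &
      has_sum Om (fun t => w t : R^o) 1].

(* Main.v *)
Require Import Defs.
From HB Require Import structures.
From mathcomp Require Import all_boot all_order all_algebra.
From mathcomp Require Import all_classical all_reals all_analysis.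
From mathcomp Require Import lra ring.
Import Order.TTheory GRing.Theory Num.Theory.
Import numFieldNormedType.Exports.
Local Open Scope classical_set_scope.
Local Open Scope ring_scope.
Set Implicit Arguments.

Lemma string_cons (H : Type) (T : nat -> H -> H) j t x :
  string_op T (j :: t) x = string_op T t (T j x).
Proof. by []. Qed.

Lemma string_fix (H : Type) (T : nat -> H -> H) t x :
  (forall j, j \in t -> T j x = x) -> string_op T t x = x.
Proof.
elim: t => [//|j t IH] h; rewrite string_cons h ?mem_head //.
by apply: IH => k kt; apply: h; rewrite in_cons kt orbT.
Qed.

Section IP.
Variables (R : realType) (H : normedModType R) (ip : H -> H -> R).
Hypothesis Hip : is_inner_product ip.

Lemma ipC x y : ip x y = ip y x. Proof. by case: Hip. Qed.
Lemma ipDl x y z : ip (x + y) z = ip x z + ip y z. Proof. by case: Hip. Qed.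
Lemma ipZl a x y : ip (a *: x) y = a * ip x y. Proof. by case: Hip. Qed.
Lemma ipxx x : ip x x = `|x| ^+ 2. Proof. by case: Hip. Qed.
Lemma ipDr x y z : ip x (y + z) = ip x y + ip x z.
Proof. by rewrite ipC ipDl ipC (ipC z). Qed.
Lemma ipNl x y : ip (- x) y = - ip x y.
Proof. by rewrite -scaleN1r ipZl mulN1r. Qed.
Lemma ipNr x y : ip x (- y) = - ip x y.
Proof. by rewrite ipC ipNl ipC. Qed.
Lemma ip0l y : ip 0 y = 0.
Proof. by rewrite -(scale0r (0:H)) ipZl mul0r. Qed.
Lemma ip_sum (s : seq (seq nat)) (f : seq nat -> H) u :
  ip (\sum_(t <- s) f t) u = \sum_(t <- s) ip (f t) u.
Proof.
elim: s => [|a s IH]; first by rewrite !big_nil ip0l.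
by rewrite !big_cons ipDl IH.
Qed.
Lemma ip_expand p q : `|p + q| ^+ 2 = `|p| ^+ 2 + 2 * ip p q + `|q| ^+ 2.
Proof. by rewrite -!ipxx ipDl !ipDr (ipC q p); lra. Qed.
Lemma ip_half p q : ip p q <= (`|p| ^+ 2 + `|q| ^+ 2) / 2.
Proof.
have := ip_expand p (- q); rewrite normrN ipNr => h.
have : 0 <= `|p - q| ^+ 2 by rewrite exprn_ge0.
lra.
Qed.
Lemma ip_CS1 p q : ip p q <= `|p| * `|q|.
Proof.
have h := ip_expand p q.
have h2 : `|p + q| ^+ 2 <= (`|p| + `|q|) ^+ 2.
  by rewrite lerXn2r ?nnegrE ?addr_ge0 ?ler_normD.
nra.
Qed.
Lemma ip_CS p q : `|ip p q| <= `|p| * `|q|.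
Proof.
rewrite ler_norml ip_CS1 andbT.
have := ip_CS1 (- p) q; rewrite ipNl normrN; lra.
Qed.
Lemma fne_key p q : `|q| ^+ 2 <= ip (p + q) q -> `|p| ^+ 2 + `|q| ^+ 2 <= `|p + q| ^+ 2.
Proof. rewrite ip_expand ipDl ipxx; lra. Qed.
Section Str.
Variables (D : set H) (I : set nat) (Tf : nat -> H -> H) (z : H).
Hypothesis TD : forall i, I i -> forall x, D x -> D (Tf i x).
Hypothesis Tfne : forall i, I i -> firmly_nonexpansive ip D (Tf i).
Hypothesis Dz : D z.
Hypothesis Fz : forall i, I i -> Tf i z = z.

Lemma step i y : I i -> D y ->
  `|Tf i y - z| ^+ 2 + `|Tf i y - y| ^+ 2 <= `|y - z| ^+ 2.
Proof.
move=> Ii Dy.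
have h := Tfne Ii Dy Dz; rewrite Fz // in h.
have := @fne_key (y - Tf i y) (Tf i y - z).
have e1 : `|y - Tf i y| = `|Tf i y - y| by rewrite -normrN opprB.
have e2 : y - Tf i y + (Tf i y - z) = y - z by rewrite addrA subrK.
rewrite e1 e2 => /(_ h); lra.
Qed.

Lemma string_dec t y : D y -> (forall j, j \in t -> I j) ->
  `|string_op Tf t y - z| ^+ 2 <= `|y - z| ^+ 2 /\
  ((exists j, j \in t /\ Tf j y != y) ->
     `|string_op Tf t y - z| ^+ 2 < `|y - z| ^+ 2).
Proof.
elim: t y => [|j t IH] y Dy It.
  by split => //; case=> j [].
have Ij : I j by apply: It; rewrite mem_head.
have It' : forall k, k \in t -> I k by move=> k kt; apply: It; rewrite in_cons kt orbT.
have [A B] := IH _ (TD Ij Dy) It'.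
have st := @step j y Ij Dy.
rewrite string_cons; split.
  apply: le_trans A _.
  have : 0 <= `|Tf j y - y| ^+ 2 by rewrite exprn_ge0.
  lra.
case=> j' [j't nf].
have [e|ne] := eqVneq (Tf j y) y.
  rewrite e; rewrite e in A B.
  apply: B; exists j'; split => //.
  move: j't; rewrite in_cons => /orP [/eqP ej|//].
  by move: nf; rewrite ej e eqxx.
apply: le_lt_trans A _.
have : 0 < `|Tf j y - y| ^+ 2 by rewrite exprn_gt0 // normr_gt0 subr_eq0.
lra.
Qed.


End Str.
End IP.

Lemma eq2_aux (V : zmodType) (S x z A : V) : S - A = x - z + (S - x - (A - z)).
Proof.
rewrite opprB !addrA.
rewrite [x - z + S - x]addrAC [x - z - x]addrAC subrr add0r [- z + S]addrC subrK //.
Qed.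

Unset Implicit Arguments.
Theorem lemma3 (R : realType) (H : completeNormedModType R) (ip : H -> H -> R)
  (Hip : is_inner_product ip)
  (D : set H) (D0 : D !=set0) (Dcl : closed D) (Dcvx : convex_set_in D)
  (I : set nat) (Ipos : forall i, I i -> (0 < i)%N)
  (Tf : nat -> H -> H)
  (TD : forall i, I i -> forall x, D x -> D (Tf i x))
  (Tfne : forall i, I i -> firmly_nonexpansive ip D (Tf i))
  (F0 : (\bigcap_(i in I) Fix D (Tf i)) !=set0)
  (Om : set (seq nat)) (w : seq nat -> R) (Mw : M_infty I Om w)
  (T : H -> H)
  (Tdef : forall x, D x -> has_sum Om (fun t => w t *: string_op Tf t x) (T x)) :
  Fix D T = \bigcap_(i in I) Fix D (Tf i).
Proof.
case: Mw => Mind Mfit Mw01 Msum.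
have It t : Om t -> forall j, j \in t -> I j by move=> /Mind [_ h].
apply/seteqP; split.
- move=> x [Dx Tx] i Ii; split => //.
  apply/eqP/negPn/negP => nf.
  case: F0 => z Fz0.
  have Fz j : I j -> Tf j z = z by move=> Ij; case: (Fz0 j Ij).
  have Dz : D z by case: (Fz0 i Ii).
  have [t0 [Omt0 it0]] := Mfit i Ii.
  pose u := x - z; pose a := `|u| ^+ 2.
  have half p : ip p u <= (`|p| ^+ 2 + a) / 2 by apply: ip_half.
  have bound t : Om t -> ip (string_op Tf t x - z) u <= a.
    move=> Omt; have [A _] := string_dec Hip I Tf TD Tfne Dz Fz t x Dx (It t Omt).
    have := half (string_op Tf t x - z); rewrite /a /u; lra.
  have [A0 B0] := string_dec Hip I Tf TD Tfne Dz Fz t0 x Dx (It t0 Omt0).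
  have S0 := B0 (ex_intro _ i (conj it0 nf)).
  pose y0 := string_op Tf t0 x.
  pose d := a - `|y0 - z| ^+ 2.
  have dpos : 0 < d by rewrite /d /a /u /y0; lra.
  have bound0 : ip (y0 - z) u <= a - d / 2.
    have := half (y0 - z); rewrite /d; lra.
  have [w0 _] := Mw01 t0 Omt0.
  pose c := a + `|u| + `|z| * `|u| + 1.
  have cpos : 0 < c by rewrite /c /a; have := normr_ge0 u; have := normr_ge0 z;
    have := exprn_ge0 2 (normr_ge0 u); nra.
  pose eps := w t0 * d / 2 / c.
  have epos : 0 < eps by rewrite /eps !divr_gt0 // mulr_gt0.
  have [F1 [F1Om HF1]] := Tdef x Dx eps epos.
  have [F2 [F2Om HF2]] := Msum eps epos.
  pose F := (F1 `|` F2 `|` [fset t0])%fset.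
  have FOm : [set` F] `<=` Om.
    move=> t /=; rewrite !in_fsetU in_fset1 => /orP[/orP[h|h]|/eqP->] //.
    + exact: F1Om.
    + exact: F2Om.
  have sub1 : [set` F1] `<=` [set` F].
    by move=> t /= h; rewrite !in_fsetU h.
  have sub2 : [set` F2] `<=` [set` F].
    by move=> t /= h; rewrite !in_fsetU h orbT.
  have t0F : t0 \in F by rewrite !in_fsetU in_fset1 eqxx orbT.
  have h1 := HF1 F sub1 FOm; rewrite Tx in h1.
  have h2 := HF2 F sub2 FOm.
  set S := \sum_(t <- F) w t *: string_op Tf t x in h1.
  pose W := \sum_(t <- F) w t.
  have h2' : `|W - 1| < eps by exact: h2.
  have key : \sum_(t <- F) w t * ip (string_op Tf t x - z) u <= W * a - w t0 * d / 2.
    rewrite /W (bigD1_seq t0) //= ?fset_uniq // (bigD1_seq t0 _ (fset_uniq F)) //=.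
    have k1 : w t0 * ip (string_op Tf t0 x - z) u <= w t0 * (a - d / 2).
      by rewrite ler_pM2l.
    have k2 : \sum_(t <- F | t != t0) w t * ip (string_op Tf t x - z) u <=
              \sum_(t <- F | t != t0) w t * a.
      rewrite big_seq_cond [leRHS]big_seq_cond; apply: ler_sum => t /andP[tF _].
      have [wt _] := Mw01 t (FOm t tF).
      by rewrite ler_pM2l // bound //; apply: FOm.
    rewrite mulrDl mulr_suml; lra.
  have eq1 : \sum_(t <- F) w t * ip (string_op Tf t x - z) u = ip (S - W *: z) u.
    have -> : S - W *: z = \sum_(t <- F) w t *: (string_op Tf t x - z).
      by rewrite /S /W scaler_suml -sumrB; apply: eq_bigr => t _; rewrite scalerBr.
    by rewrite ip_sum //; apply: eq_bigr => t _; rewrite ipZl.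
  pose e := (S - x) - (W - 1) *: z.
  have eq2 : S - W *: z = u + e.
    rewrite /e /u scalerBl scale1r; exact: eq2_aux.
  rewrite eq1 eq2 ipDl // ipxx // -/a in key.
  have ce := ip_CS Hip e u.
  have ne : `|e| <= `|S - x| + `|W - 1| * `|z|.
    by rewrite -normrZ ler_normB.
  have nu := normr_ge0 u; have nz := normr_ge0 z; have na : 0 <= a by rewrite exprn_ge0.
  have p1 : (W - 1) * a <= eps * a.
    have : W - 1 <= eps by apply: le_trans (ltW h2'); apply: ler_norm.
    nra.
  have p2 : `|e| * `|u| <= (`|S - x| + `|W - 1| * `|z|) * `|u| by nra.
  have p3 : `|S - x| * `|u| <= eps * `|u| by nra.
  have p4 : `|W - 1| * (`|z| * `|u|) <= eps * (`|z| * `|u|).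
    have zu := mulr_ge0 nz nu.
    have le2 : `|W - 1| <= eps by rewrite le_eqVlt h2' orbT.
    nra.
  have p5 : eps * c = w t0 * d / 2 by rewrite /eps; field; rewrite gt_eqF.
  have : -`|e| * `|u| <= ip e u by move: ce; rewrite ler_norml mulNr => /andP[].
  rewrite /c in p5; nra.
- move=> x Hx.
  have [F2 [F2Om HF2]] := Msum (1/2) (ltac:(by rewrite divr_gt0)).
  have Dx : D x.
    have := HF2 F2 (fun t h => h) F2Om.
    case E : (F2 : seq _) => [|t s].
      rewrite big_nil /= sub0r normrN normr1 => h; exfalso; move: h; clear E; lra.
    move=> _.
    have tF : t \in F2 by move: (mem_head t s); rewrite -E.
    have [tne tI] := Mind t (F2Om t tF).
    case: t tne tI {E tF} => [//|j t] _ tI.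
    by case: (Hx j (tI j (mem_head j t))).
  split => //.
  apply/eqP/negPn/negP => ne.
  pose e := `|T x - x| / 2.
  have epos : 0 < e by rewrite divr_gt0 // normr_gt0 subr_eq0.
  pose eps := e / (`|x| + 1).
  have nx := normr_ge0 x.
  have eppos : 0 < eps by rewrite divr_gt0 //; lra.
  have [F1 [F1Om HF1]] := Tdef x Dx e epos.
  have [F3 [F3Om HF3]] := Msum eps eppos.
  pose F := (F1 `|` F3)%fset.
  have FOm : [set` F] `<=` Om.
    move=> t /=; rewrite !in_fsetU => /orP[h|h].
    + exact: F1Om.
    + exact: F3Om.
  have sub1 : [set` F1] `<=` [set` F].
    by move=> t /= h; rewrite !in_fsetU h.
  have sub3 : [set` F3] `<=` [set` F].
    by move=> t /= h; rewrite !in_fsetU h orbT.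
  have h1 := HF1 F sub1 FOm.
  have h3 := HF3 F sub3 FOm.
  pose W := \sum_(t <- F) w t.
  have h3' : `|W - 1| < eps by exact: h3.
  have eqS : \sum_(t <- F) w t *: string_op Tf t x = W *: x.
    rewrite /W scaler_suml; apply: eq_big_seq => t tF.
    rewrite string_fix // => j jt.
    by case: (Hx j (It t (FOm t tF) j jt)).
  rewrite eqS in h1.
  have h4 : `|W *: x - x| <= eps * `|x|.
    have -> : W *: x - x = (W - 1) *: x by rewrite scalerBl scale1r.
    rewrite normrZ; have := ltW h3'; nra.
  have h5 : eps * `|x| < e.
    have q : eps * (`|x| + 1) = e.
      rewrite /eps; field; rewrite gt_eqF //; lra.
    rewrite mulrDr mulr1 in q; lra.
  have tri : `|T x - x| <= `|T x - W *: x| + `|W *: x - x|.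
    have -> : T x - x = (T x - W *: x) + (W *: x - x) by rewrite addrA subrK.
    exact: ler_normD.
  rewrite distrC in h1.
  have : `|T x - x| = 2 * e by rewrite /e; field.
  lra.
Qed.
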